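(* Let $N\ge 2$ be even and consider the Clos network $C_{N,3}$. Let $X_1$ consist of $N/2$ flows from $I_1$ to $O_1$ and $N/2$ flows from $I_2$ to $O_2$; let $X_2$ consist of $N/2$ flows from $I_1$ to $O_2$; let $Y_2$ consist of $N/2$ flows from $I_3$ to $O_1$ and $N/2$ flows from $I_3$ to $O_2$; all flows have demand $1$, and distinct flows incident to a common input (resp. output) switch use distinct source (resp. destination) servers of that switch. Let $X=X_1\cup X_2$ and $Y=X_1\cup Y_2$, and let $\mathcal{M}=\{M_1,\dots,M_N\}$. Then: (P1) in every link-disjoint routing of $X$, the $N/2$ flows $(I_1,O_1)$ are assigned to $N/2$ distinct middle switches forming a set $\mathcal{N}$, and the $N/2$ flows $(I_2,O_2)$ are assigned to distinct middle switches forming the same set $\mathcal{N}$; (P2) in every link-disjoint routing of $Y$, the $N/2$ flows $(I_1,O_1)$ are assigned to $N/2$ distinct middle switches forming a set $\mathcal{N}$, and the $N/2$ flows $(I_2,O_2)$ are assigned to distinct middle switches forming the set $\mathcal{M}\setminus\mathcal{N}$. Consequently, no routing of $X_1$ satisfies both the restriction of (P1) and of (P2) to $X_1$.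
   Context: Clos network $C_{N,R}$: a directed graph with $N$ middle switches $M_1,\dots,M_N$, $R$ input switches $I_1,\dots,I_R$, $R$ output switches $O_1,\dots,O_R$, source servers $s_i^k$ attached to $I_i$ and destination servers $t_i^k$ attached to $O_i$ ($k\in[N]$), with edges $s_i^kI_i$, $I_iM_m$, $M_mO_i$, $O_it_i^k$. A routing assigns each flow a single middle switch (i.e. a path input switch – middle switch – output switch). A routing is link-disjoint if no link $I_iM_m$ or $M_mO_j$ is used by two flows. *)

(* Defs.v *)
From mathcomp Require Import all_boot.
Set Implicit Arguments. Unset Strict Implicit. Unset Printing Implicit Defensive.

(* Clos network C_{N,R}: input switches I_i and output switches O_i indexed by
   'I_R, middle switches M_m indexed by 'I_N, and each input (resp. output)
   switch has N source (resp. destination) servers indexed by 'I_N.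
   A flow is (source switch, source server, destination switch, destination
   server); all flows have demand 1. *)
Definition flow (R N : nat) : finType := ('I_R * 'I_N * ('I_R * 'I_N))%type.

Definition src_sw {R N} (f : flow R N) : 'I_R := f.1.1.
Definition src_srv {R N} (f : flow R N) : 'I_N := f.1.2.
Definition dst_sw {R N} (f : flow R N) : 'I_R := f.2.1.
Definition dst_srv {R N} (f : flow R N) : 'I_N := f.2.2.

Definition well_formed {R N} (F : {set flow R N}) : Prop :=
  forall f g, f \in F -> g \in F -> f != g ->
    (src_sw f = src_sw g -> src_srv f <> src_srv g) /\
    (dst_sw f = dst_sw g -> dst_srv f <> dst_srv g).

Definition routing (R N : nat) := flow R N -> 'I_N.

(* Link-disjoint on the flow set F: no link I_i M_m or M_m O_j is used by two
   distinct flows of F. *)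
Definition link_disjoint {R N} (F : {set flow R N}) (r : routing R N) : Prop :=
  forall f g, f \in F -> g \in F -> f != g ->
    (src_sw f = src_sw g -> r f <> r g) /\
    (dst_sw f = dst_sw g -> r f <> r g).

Definition flows_between {R N} (F : {set flow R N}) (i j : 'I_R) : {set flow R N} :=
  [set f in F | (src_sw f == i) && (dst_sw f == j)].

(* Switch indices in C_{N,3}: I_1,I_2,I_3 are 0,1,2 (same for outputs). *)
Definition sw1 : 'I_3 := @Ordinal 3 0 isT.
Definition sw2 : 'I_3 := @Ordinal 3 1 isT.
Definition sw3 : 'I_3 := @Ordinal 3 2 isT.

(* Main.v *)
Require Import Defs.
From mathcomp Require Import all_boot.

Lemma fbP R N (F : {set flow R N}) i j f :
  f \in flows_between F i j -> [/\ f \in F, src_sw f = i & dst_sw f = j].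
Proof. by rewrite !inE => /andP[-> /andP[/eqP -> /eqP ->]]. Qed.

Lemma compl_img (T : finType) N (r : T -> 'I_N) (F G : {set T}) :
  (forall x, x \in F -> x \notin G) -> {in F :|: G &, injective r} ->
  #|F| + #|G| = N -> r @: G = ~: (r @: F).
Proof.
move=> dis inj cFG.
have cU : #|F :|: G| = N.
  rewrite cardsU -cFG; suff -> : F :&: G = set0 by rewrite cards0 subn0.
  apply/setP=> x; rewrite !inE; apply/negP => /andP[xF xG].
  by move: (dis x xF); rewrite xG.
have imT : r @: (F :|: G) = setT.
  apply/eqP; rewrite eqEcard subsetT cardsT card_ord (card_in_imset inj) cU leqnn.
  done.
apply/setP=> m; rewrite inE.
have : m \in r @: (F :|: G) by rewrite imT inE.
rewrite imsetU inE => /orP[] mI.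
- have -> : m \in r @: F = true by [].
  case/imsetP: mI => f fF ->.
  apply/negP=> /imsetP[g gG e].
  have fg : f = g by apply: inj; rewrite // inE ?fF ?gG ?orbT.
  by move: (dis f fF); rewrite fg gG.
- rewrite mI; apply/esym/negP => /imsetP[f fF e].
  case/imsetP: mI e => g gG -> e.
  have fg : f = g by apply: inj; rewrite // inE ?fF ?gG ?orbT.
  by move: (dis f fF); rewrite fg gG.
Qed.

Lemma ld_inj R N (F S : {set flow R N}) (r : routing R N) :
  link_disjoint F r -> S \subset F ->
  (forall f g, f \in S -> g \in S -> src_sw f = src_sw g \/ dst_sw f = dst_sw g) ->
  {in S &, injective r}.
Proof.
move=> ld sub H f g fS gS e; case: (eqVneq f g) => // ne.
have [h1 h2] := ld f g (subsetP sub f fS) (subsetP sub g gS) ne.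
by case: (H f g fS gS) => [/h1|/h2].
Qed.

Arguments ld_inj {R N F S r}.
Arguments compl_img {T N r F G}.
Arguments fbP {R N F i j f}.

Theorem mainTheorem11 (N : nat) (X1 X2 Y2 : {set flow 3 N}) :
  2 <= N -> ~~ odd N ->
  (* X1: N/2 flows (I1,O1) and N/2 flows (I2,O2), nothing else *)
  X1 = flows_between X1 sw1 sw1 :|: flows_between X1 sw2 sw2 ->
  #|flows_between X1 sw1 sw1| = N./2 ->
  #|flows_between X1 sw2 sw2| = N./2 ->
  (* X2: N/2 flows (I1,O2) *)
  X2 = flows_between X2 sw1 sw2 ->
  #|X2| = N./2 ->
  (* Y2: N/2 flows (I3,O1) and N/2 flows (I3,O2) *)
  Y2 = flows_between Y2 sw3 sw1 :|: flows_between Y2 sw3 sw2 ->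
  #|flows_between Y2 sw3 sw1| = N./2 ->
  #|flows_between Y2 sw3 sw2| = N./2 ->
  (* distinct servers for distinct flows at a common switch *)
  well_formed (X1 :|: X2) ->
  well_formed (X1 :|: Y2) ->
  let A := flows_between X1 sw1 sw1 in
  let B := flows_between X1 sw2 sw2 in
  (* (P1) *)
  (forall r : routing 3 N, link_disjoint (X1 :|: X2) r ->
     {in A &, injective r} /\ {in B &, injective r} /\ r @: B = r @: A) /\
  (* (P2) *)
  (forall r : routing 3 N, link_disjoint (X1 :|: Y2) r ->
     {in A &, injective r} /\ {in B &, injective r} /\ r @: B = ~: (r @: A)) /\
  (* consequence *)
  ~ (exists r : routing 3 N,
       {in A &, injective r} /\ {in B &, injective r} /\
       r @: B = r @: A /\ r @: B = ~: (r @: A)).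
Proof.
move=> N2 oddN _ cA cB eX2 cX2 _ cC cD _ _ A B.
have hN : N./2 + N./2 = N.
  by have := odd_double_half N; rewrite (negbTE oddN) add0n -addnn.
have cX2' : #|flows_between X2 sw1 sw2| = N./2 by rewrite -eX2.
set X2' := flows_between X2 sw1 sw2.
set C := flows_between Y2 sw3 sw1.
set D := flows_between Y2 sw3 sw2.
have subL : forall (U V W : {set flow 3 N}) i j k l,
  flows_between U i j :|: flows_between V k l \subset W ->
  flows_between U i j \subset W /\ flows_between V k l \subset W.
  move=> U V W i j k l s; split; apply: subset_trans s;
    [exact: subsetUl | exact: subsetUr].
have sub : forall (U W : {set flow 3 N}) (i j : 'I_3), U \subset W ->
   flows_between U i j \subset W.
  move=> U W i j s; apply/subsetP=> f /fbP[fU _ _]; exact: subsetP s f fU.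
have dj : forall (U V : {set flow 3 N}) i j k l, (i != k) || (j != l) ->
    forall x, x \in flows_between U i j -> x \notin flows_between V k l.
  move=> U V i j k l H x /fbP[_ h1 h2]; apply/negP => /fbP[_ h3 h4].
  by move: H; rewrite -h1 -h2 h3 h4 !eqxx.
have s0 : forall (U W : {set flow 3 N}) (i j k l : 'I_3) (P Q : {set flow 3 N}),
   P \subset W -> Q \subset W -> P :|: Q \subset W.
  by move=> *; rewrite subUset; apply/andP.
have srcS : forall (U V : {set flow 3 N}) i j k, forall f g,
   f \in flows_between U i j :|: flows_between V i k ->
   g \in flows_between U i j :|: flows_between V i k -> src_sw f = src_sw g.
  move=> U V i j k f g; rewrite !inE.
  by case/orP => /andP[_ /andP[/eqP -> _]]; case/orP => /andP[_ /andP[/eqP -> _]].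
have dstS : forall (U V : {set flow 3 N}) i j k, forall f g,
   f \in flows_between U j i :|: flows_between V k i ->
   g \in flows_between U j i :|: flows_between V k i -> dst_sw f = dst_sw g.
  move=> U V i j k f g; rewrite !inE.
  by case/orP => /andP[_ /andP[_ /eqP ->]]; case/orP => /andP[_ /andP[_ /eqP ->]].
have injU : forall (S1 S2 : {set flow 3 N}) (r : routing 3 N),
   {in S1 :|: S2 &, injective r} -> {in S1 &, injective r}.
  by move=> S1 S2 r h f g fS gS; apply: h; rewrite inE ?fS ?gS.
have P1 : forall r : routing 3 N, link_disjoint (X1 :|: X2) r ->
     {in A &, injective r} /\ {in B &, injective r} /\ r @: B = r @: A.
  move=> r ld.
  have s1 : A :|: X2' \subset X1 :|: X2.
    by rewrite subUset (sub _ _ _ _ (subsetUl _ _)) (sub _ _ _ _ (subsetUr _ _)).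
  have s2 : B :|: X2' \subset X1 :|: X2.
    by rewrite subUset (sub _ _ _ _ (subsetUl _ _)) (sub _ _ _ _ (subsetUr _ _)).
  have i1 : {in A :|: X2' &, injective r}.
    by apply: (ld_inj ld s1) => f g Hf Hg; left; apply: (srcS _ _ _ _ _ f g Hf Hg).
  have i2 : {in B :|: X2' &, injective r}.
    by apply: (ld_inj ld s2) => f g Hf Hg; right; apply: (dstS _ _ _ _ _ f g Hf Hg).
  have e1 : r @: X2' = ~: (r @: A).
    by apply: compl_img i1 _; [apply: dj | rewrite /A cA cX2'].
  have e2 : r @: X2' = ~: (r @: B).
    by apply: compl_img i2 _; [apply: dj | rewrite /B cB cX2'].
  split; [exact: injU i1 | split; [exact: injU i2 |]].
  by apply: setC_inj; rewrite -e1 -e2.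
have P2 : forall r : routing 3 N, link_disjoint (X1 :|: Y2) r ->
     {in A &, injective r} /\ {in B &, injective r} /\ r @: B = ~: (r @: A).
  move=> r ld.
  have s1 : A :|: C \subset X1 :|: Y2.
    by rewrite subUset (sub _ _ _ _ (subsetUl _ _)) (sub _ _ _ _ (subsetUr _ _)).
  have s2 : B :|: D \subset X1 :|: Y2.
    by rewrite subUset (sub _ _ _ _ (subsetUl _ _)) (sub _ _ _ _ (subsetUr _ _)).
  have s3 : C :|: D \subset X1 :|: Y2.
    by rewrite subUset !(sub _ _ _ _ (subsetUr _ _)).
  have i1 : {in A :|: C &, injective r}.
    by apply: (ld_inj ld s1) => f g Hf Hg; right; apply: (dstS _ _ _ _ _ f g Hf Hg).
  have i2 : {in B :|: D &, injective r}.
    by apply: (ld_inj ld s2) => f g Hf Hg; right; apply: (dstS _ _ _ _ _ f g Hf Hg).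
  have i3 : {in C :|: D &, injective r}.
    by apply: (ld_inj ld s3) => f g Hf Hg; left; apply: (srcS _ _ _ _ _ f g Hf Hg).
  have e1 : r @: C = ~: (r @: A).
    by apply: compl_img i1 _; [apply: dj | rewrite /A cA cC].
  have e2 : r @: D = ~: (r @: B).
    by apply: compl_img i2 _; [apply: dj | rewrite /B cB cD].
  have e3 : r @: D = ~: (r @: C).
    by apply: compl_img i3 _; [apply: dj | rewrite /C cC cD].
  split; [exact: injU i1 | split; [exact: injU i2 |]].
  by apply: setC_inj; rewrite -e2 e3 e1 setCK.
split; [exact: P1 | split; [exact: P2 |]].
case=> r [_ [_ [h1 h2]]].
have : (0 < #|A|) by rewrite /A cA half_gt0.
case/card_gt0P => f fA.
have : r f \in r @: B by rewrite h1; apply: imset_f.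
by rewrite h2 inE imset_f.
Qed.
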